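(* Let $B$ be a compact manifold with nonempty boundary $\partial B$, $c:\partial B\times[0,1)\hookrightarrow B$ an open collar of $\partial B$, and $\mathcal U=\{U_\alpha\}_{\alpha\in I}$ a finite open cover of $B$. Then there is $\epsilon\in(0,1]$ such that the subcollar $c|:\partial B\times[0,\epsilon)\hookrightarrow B$ is small with respect to $\mathcal U$.
   Context: A collar $c:\partial B\times[0,\epsilon)\hookrightarrow B$ is small with respect to $\mathcal U$ if (1) $U_\alpha\cap\big(B\setminus c(\partial B\times[0,\epsilon))\big)\ne\emptyset$ for every $\alpha\in I$, and (2) letting $I_\partial\subset I$ be the set of $\alpha$ with $U_\alpha\cap\partial B\neq\emptyset$, there exist open sets $W_\alpha\subset\partial B$, $\alpha\in I_\partial$, with $c(W_\alpha\times[0,\epsilon))\subset U_\alpha$ and $\{W_\alpha\}_{\alpha\in I_\partial}$ an open cover of $\partial B$. *)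

(* Defs.v *)
From HB Require Import structures.
From mathcomp Require Import all_boot all_order all_algebra.
From mathcomp Require Import all_classical all_reals all_analysis.
Set Implicit Arguments. Unset Strict Implicit. Unset Printing Implicit Defensive.
Import Order.TTheory GRing.Theory Num.Theory.
Import numFieldNormedType.Exports.
Local Open Scope classical_set_scope.
Local Open Scope ring_scope.

(* Closed half-space H^n = { v in R^n | v_0 >= 0 } (all of R^0 if n = 0). *)
Definition halfspace (R : realType) (n : nat) : set 'rV[R]_n :=
  [set v | forall i : 'I_n, nat_of_ord i = 0%N -> 0 <= v ord0 i].

Definition homeo_onto (X Y : topologicalType) (V : set X) (W : set Y)
    (f : X -> Y) : Prop :=
  exists g : Y -> X,
    [/\ {within V, continuous f}, {within W, continuous g}, f @` V = W,
        (forall x, V x -> g (f x) = x) & (forall y, W y -> f (g y) = y)].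

Definition mfd_interior_point (R : realType) (n : nat) (B : topologicalType)
    (x : B) : Prop :=
  exists (V : set B) (phi : B -> 'rV[R]_n) (O : set 'rV[R]_n),
    [/\ open V, V x, open O & homeo_onto V O phi].

Definition manifold_with_boundary (R : realType) (n : nat) (B : topologicalType)
    : Prop :=
  hausdorff_space B /\
  forall x : B, exists (V : set B) (phi : B -> 'rV[R]_n) (O : set 'rV[R]_n),
    [/\ open V, V x, open O & homeo_onto V (O `&` @halfspace R n) phi].

Definition mfd_boundary (R : realType) (n : nat) (B : topologicalType) : set B :=
  [set x | ~ mfd_interior_point R n x].

Definition collar_dom (R : realType) (B : topologicalType) (bd : set B) (e : R)
    : set (B * R)%type := [set p | bd p.1 /\ 0 <= p.2 < e].

Definition uncurry_collar (R : realType) (B : topologicalType) (c : B -> R -> B)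
    : B * R -> B := fun p => c p.1 p.2.

Definition open_collar (R : realType) (B : topologicalType) (bd : set B)
    (c : B -> R -> B) : Prop :=
  [/\ open (uncurry_collar c @` collar_dom bd 1),
      homeo_onto (collar_dom bd 1) (uncurry_collar c @` collar_dom bd 1)
        (uncurry_collar c)
    & forall x, bd x -> c x 0 = x].

Definition small_collar (R : realType) (B : topologicalType) (bd : set B)
    (c : B -> R -> B) (e : R) (I : Type) (U : I -> set B) : Prop :=
  (forall a : I, U a `&` ~` (uncurry_collar c @` collar_dom bd e) !=set0) /\
  exists W : I -> set B,
    (forall a : I, bd `&` U a !=set0 ->
        (exists O : set B, open O /\ W a = O `&` bd) /\
        (forall x t, W a x -> 0 <= t < e -> U a (c x t))) /\
    (bd `<=` \bigcup_(a in [set a | bd `&` U a !=set0]) W a).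

Arguments mfd_boundary R n B : clear implicits.
Arguments manifold_with_boundary R n B : clear implicits.

(* Main.v *)
Require Import Defs.
From HB Require Import structures.
From mathcomp Require Import all_boot all_order all_algebra.
From mathcomp Require Import all_classical all_reals all_analysis.
Import Order.TTheory GRing.Theory Num.Theory.
Import numFieldNormedType.Exports.
Local Open Scope classical_set_scope.
Local Open Scope ring_scope.

Lemma within_pre (X Y : topologicalType) (A : set X) (f : X -> Y) (x : X) (W : set Y) :
 {within A, continuous f} -> A x -> open W -> W (f x) ->
 \forall y \near x, A y -> W (f y).
Proof.
move=> /subspace_continuousP cf Ax oW Wfx.
have := cf x Ax W (open_nbhs_nbhs (conj oW Wfx)).
by [].
Qed.
Lemma interior_open (R : realType) (n : nat) (B : topologicalType) :
  open [set x : B | mfd_interior_point R n x].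
Proof.
rewrite openE => x [V [ph [ O0 [oV Vx oO hom]]]].
rewrite /interior; apply: (@filterS _ _ _ V); last first.
  by apply: open_nbhs_nbhs; split.
by move=> y Vy; exists V, ph, O0; split.
Qed.

Lemma bd_closed (R : realType) (n : nat) (B : topologicalType) :
  closed (mfd_boundary R n B).
Proof.
have -> : mfd_boundary R n B = ~` [set x : B | mfd_interior_point R n x] by [].
exact/open_closedC/interior_open.
Qed.
Lemma open_interior_pt (R : realType) (n : nat) (B : topologicalType) (U : set B) :
  manifold_with_boundary R n B -> open U -> U !=set0 ->
  exists y, U y /\ mfd_interior_point R n y.
Proof.
move=> [_ hch] oU [x Ux].
case: n hch => [|n] hch;
  have [V [phi [ O0 [oV Vx oO [g [cphi cg img gK phiK]]]]]] := hch x.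
  have hT : O0 `&` @halfspace R 0 = O0.
    by apply/seteqP; split=> [w [] //|w Ow]; split=> // -[].
  rewrite hT in img cg phiK.
  exists x; split=> //; exists V, phi, O0; split=> //.
  by exists g; split.
set v := phi x.
have Hv : (O0 `&` @halfspace R n.+1) v by rewrite -img; exists x.
set e0 : 'rV[R]_n.+1 := delta_mx 0 ord0.
set w := fun s : R => v + s *: e0.
have wE s : w s 0 ord0 = v 0 ord0 + s.
  by rewrite /w !mxE eqxx mulr1.
have v0 : 0 <= v 0 ord0 by case: Hv => _; apply.
have near1 : \forall z \near v, (O0 `&` @halfspace R n.+1) z -> (U `&` V) (g z).
  apply: within_pre => //; first exact: openI.
  by rewrite /v gK.
have near2 : \forall z \near v, O0 z.
  by apply: open_nbhs_nbhs; split => //; case: Hv.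
have cw : {for 0, continuous w}.
  apply: continuousD; first exact: cst_continuous.
  by apply: continuousZr_tmp; exact: cvg_id.
have w0 : w 0 = v by rewrite /w scale0r addr0.
have cw' : w @ (0:R) --> v by rewrite -w0; exact: cw.
have N0 : \forall z \near v, O0 z /\ ((O0 `&` @halfspace R n.+1) z -> (U `&` V) (g z)).
  by apply: filterS2 near2 near1 => z h1 h2.
have N := cw' _ N0.
have N' : \forall s \near 0^'+, O0 (w s) /\ ((O0 `&` @halfspace R n.+1) (w s) -> (U `&` V) (g (w s))).
  have N2 : \forall s \near (0:R), O0 (w s) /\ ((O0 `&` @halfspace R n.+1) (w s) -> (U `&` V) (g (w s))) := N.
  move: N2; rewrite /at_right /within /= => h; by apply: filterS h => s Ps _.
have : \forall s \near 0^'+, 0 < s /\ O0 (w s) /\ ((O0 `&` @halfspace R n.+1) (w s) -> (U `&` V) (g (w s))).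
  by apply: filterS2 (nbhs_right_gt 0) N' => s s0 [h1 h2].
move=> /filter_ex [s [s0 [Ows Hs]]].
have Hws : (O0 `&` @halfspace R n.+1) (w s).
  split=> // i i0; have -> : i = ord0 by apply: val_inj.
  by rewrite wE; apply: addr_ge0 => //; apply: ltW.
have [Uy Vy] := Hs Hws.
exists (g (w s)); split=> //.
set O' := O0 `&` [set z : 'rV[R]_n.+1 | 0 < z 0 ord0].
have O'H : O' `<=` O0 `&` @halfspace R n.+1.
  move=> z [Oz z0]; split=> // i i0; have -> : i = ord0 by apply: val_inj.
  exact: ltW.
exists (V `&` phi @^-1` O'), phi, O'; split.
- apply: (continuous_inP _ oV).1 => //.
    by rewrite -continuous_open_subspace.
  apply: openI => //.
  exact: ((continuousP _).1 (@coord_continuous R 1 n.+1 0 ord0) _ (@open_gt R 0)).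
- split=> //; rewrite /preimage /= phiK //; split=> //.
  by rewrite /= wE; apply: ltr_wpDl.
- apply: openI => //.
  exact: ((continuousP _).1 (@coord_continuous R 1 n.+1 0 ord0) _ (@open_gt R 0)).
- exists g; split.
  + by apply: continuous_subspaceW cphi => z [].
  + exact: continuous_subspaceW cg.
  + apply/seteqP; split=> [z [z' [Vz' Oz'] <-] //|z Oz].
    have : (O0 `&` @halfspace R n.+1) z by exact: O'H.
    rewrite -img => -[z' Vz' hz]; exists z' => //; split => //; by rewrite /preimage /= hz.
  + by move=> z [Vz _]; apply: gK.
  + move=> z hz; exact: (phiK z (O'H z hz)).
Qed.

Theorem mainTheorem10 (R : realType) (n : nat) (B : topologicalType)
    (c : B -> R -> B) (I : finType) (U : I -> set B) :
  manifold_with_boundary R n B ->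
  compact [set: B] ->
  mfd_boundary R n B !=set0 ->
  open_collar (mfd_boundary R n B) c ->
  (forall a, open (U a)) ->
  (forall a, U a !=set0) ->
  [set: B] `<=` \bigcup_(a in [set: I]) U a ->
  exists e : R, 0 < e <= 1 /\ small_collar (mfd_boundary R n B) c e U.
Proof.
move=> hM hcpt _ [hopen [g [cc cg img gK phiK]] hc0] hUo hUne hcov.
set bd := mfd_boundary R n B.
have S1 : forall a, \forall e \near 0^'+,
    U a `&` ~` (uncurry_collar c @` collar_dom bd e) !=set0.
  move=> a; have [y [Uy iy]] := @open_interior_pt R n B (U a) hM (hUo a) (hUne a).
  have nby : ~ bd y by move=> h; apply: h.
  case: (pselect ((uncurry_collar c @` collar_dom bd 1) y)) => [[[b t] [/= bb /andP [t0 t1]] ey]|ny].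
    have tpos : 0 < t.
      rewrite lt0r t0 andbT; apply/eqP => t00; apply: nby.
      by rewrite -ey /uncurry_collar /= t00 hc0.
    near=> e; exists y; split => //.
    move=> [[b' t'] [/= bb' /andP [t0' t1']] ey'].
    have et : e <= t by near: e; exact: nbhs_right_le.
    have t'1 : t' < 1 by apply: lt_le_trans t1'  _; apply: le_trans et (ltW t1).
    have := gK (b', t'); rewrite ey' => /(_ (conj bb' _)).
    rewrite t0' t'1 => /(_ isT).
    have := gK (b, t); rewrite ey => /(_ (conj bb _)).
    rewrite t0 t1 => /(_ isT) -> [_ tt'].
    by move: t1'; rewrite -tt' => /lt_le_trans /(_ et); rewrite ltxx.
  near=> e; exists y; split => //.
  move=> [[b' t'] [/= bb' /andP [t0' t1']] ey']; apply: ny.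
  exists (b', t') => //; split => //=; rewrite t0' /=.
  apply: lt_le_trans t1' _; near: e; apply: nbhs_right_le; exact: ltr01.
pose P (d : R) (x : B) := bd x -> exists a, exists O : set B,
  [/\ open O, O x & forall y t, O y -> bd y -> 0 <= t < d -> U a (c y t)].
have cbd : compact bd.
  apply: (subclosed_compact (bd_closed R n B) hcpt); exact: subsetT.
have Hcov : forall x, bd x -> \forall x' \near x & d \near 0^'+, P d x'.
  move=> x bx; have [a _ Uax] := hcov x Logic.I.
  have cx : collar_dom (R:=R) bd 1 (x, 0) by split => //=; rewrite lexx ltr01.
  have := @within_pre _ _ _ _ _ _ cc cx (hUo a).
  rewrite /uncurry_collar /= hc0 // => /(_ Uax).
  case=> -[P1 P2] [/= nP1 nP2] sub.
  move: nP1; rewrite nbhsE => -[ O [oO Ox] OP1].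
  move/nbhs_ballP: nP2 => -[r r0 rP2].
  exists (O, [set d : R | d <= r /\ d <= 1]).
    split; first by apply: open_nbhs_nbhs.
    near=> d; split; near: d; apply: nbhs_right_le => //; exact: ltr01.
  move=> [x' d] [/= Ox' [dr d1]] bx'; exists a, O; split => //.
  move=> y t Oy by' /andP [t0 td].
  have ht : P2 t.
    apply: rP2; rewrite /ball /= sub0r normrN ger0_norm //.
    exact: lt_le_trans td dr.
  apply: (sub (y, t)); first by split => //; apply: OP1.
  split => //=; rewrite t0 /=; exact: lt_le_trans td d1.
have NC := (compact_near_coveringP bd).1 cbd R (at_right 0) P _ Hcov.
have : \forall e \near 0^'+, [/\ 0 < e, e <= 1,
    (forall a, U a `&` ~` (uncurry_collar c @` collar_dom bd e) !=set0)
    & bd `<=` P e].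
  near=> e; split.
  - by near: e; exact: nbhs_right_gt.
  - by near: e; apply: nbhs_right_le; exact: ltr01.
  - by near: e; apply: filter_forall => a; exact: S1 a.
  - by near: e; exact: NC.
move=> /filter_ex [e [e0 e1 h1 h2]].
exists e; split; first by rewrite e0 e1.
split => //.
exists (fun a => [set x | bd x /\ exists O : set B, [/\ open O, O x &
   forall y t, O y -> bd y -> 0 <= t < e -> U a (c y t)]]).
split.
  move=> a _; split.
    exists [set x | exists O : set B, [/\ open O, O x &
       forall y t, O y -> bd y -> 0 <= t < e -> U a (c y t)]]; split.
      rewrite openE => x [ O [oO Ox hO]].
      rewrite -openE in oO.
      apply: (@filterS _ (nbhs x) _ O); last by apply: open_nbhs_nbhs.
      by move=> y Oy; exists O; split => //; rewrite -openE.
    by apply/seteqP; split => x /= [h1' h2']; split.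
  by move=> x t [bx [ O [oO Ox hO]]] te; exact: hO.
move=> x bx; have [a [ O [oO Ox hO]]] := h2 x bx bx.
exists a; last by split => //; exists O.
exists x; split => //; rewrite -(hc0 x bx); apply: hO => //.
by rewrite lexx e0.
Unshelve. all: end_near.
Qed.
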